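(* Let $\mathcal{H}$ be a real Hilbert space, $x^*\in\mathcal{H}$, $U$ an open neighborhood of $x^*$, and $f:U\to\mathcal{H}$ a continuously (Fréchet) differentiable map on $U$ such that $f'(x^* )$ is invertible (a bijective bounded linear operator) and the equation $f(x)=0$ has a solution in $U$. Define $v:\mathcal{H}\to\mathcal{H}$ by $v(x)=f'(x^* )x$. Then the pair $(f,v)$ is locally strongly monotone: there exist $\varepsilon>0$ with $B(x^*,\varepsilon)\subset U$ and $\alpha>0$ such that for all $x,y\in B(x^*,\varepsilon)$, \[ \langle f(x)-f(y),\, v(x)-v(y)\rangle\ \ge\ \alpha\|x-y\|^2 . \]
   Context: $B(x^*,\varepsilon)$ denotes the ball of center $x^*$ and radius $\varepsilon$ in $\mathcal{H}$. *)

(* Defs.v *)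
From HB Require Import structures.
From mathcomp Require Import all_boot all_order all_algebra.
From mathcomp Require Import all_classical all_reals all_analysis.
Set Implicit Arguments. Unset Strict Implicit. Unset Printing Implicit Defensive.
Import Order.TTheory GRing.Theory Num.Theory.
Import numFieldNormedType.Exports.
Local Open Scope classical_set_scope.
Local Open Scope ring_scope.

(* A real inner product on a normed space V whose norm is induced by it.
   A real Hilbert space is then a complete normed space (completeNormedModType)
   equipped with such an inner product. *)
Record inner_product (R : realType) (V : normedModType R) := InnerProduct {
  ip :> V -> V -> R;
  ip_sym : forall x y, ip x y = ip y x;
  ip_linl : forall (a : R) (x y z : V), ip (a *: x + y) z = a * ip x z + ip y z;
  ip_norm : forall x, ip x x = `|x| ^+ 2
}.

(* f is continuously Fréchet differentiable on U: differentiable at every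
   point of U and x |-> 'd f x is continuous on U for the operator norm
   (written out: || 'd f y h - 'd f x h || <= e ||h|| for all h). *)
Definition C1_on (R : realType) (V W : normedModType R) (U : set V) (f : V -> W) :=
  (forall x, U x -> differentiable f x) /\
  (forall x, U x -> forall e : R, 0 < e -> exists2 d : R, 0 < d &
     forall y, U y -> `|x - y| < d ->
       forall h : V, `|'d f y h - 'd f x h| <= e * `|h|).

(* Main.v *)
Require Import Defs.
From HB Require Import structures.
From mathcomp Require Import all_boot all_order all_algebra.
From mathcomp Require Import all_classical all_reals all_analysis.
Import Order.TTheory GRing.Theory Num.Theory.
Import numFieldNormedType.Exports.
Local Open Scope classical_set_scope.
Local Open Scope ring_scope.
From mathcomp Require Import ring lra.

Lemma baire_step (R : realType) (H : completeNormedModType R) (A : H -> H) :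
  bijective A -> exists n : nat, exists y0 : H, exists2 r : R, 0 < r &
   forall z, `|z - y0| < r -> forall d, 0 < d ->
     exists x, `|x| <= n%:R /\ `|A x - z| < d.
Proof.
move=> [B AB BA].
pose E (n : nat) := [set z : H | forall d : R, 0 < d ->
  exists x, `|x| <= n%:R /\ `|A x - z| < d].
pose F n := ~` E n.
have oF n : open (F n).
  rewrite openE => z Fz; rewrite /interior; apply/nbhs_ballP.
  have [d /not_implyP [d0 /forallNP nd]] : exists d : R, ~ (0 < d -> exists x, `|x| <= n%:R /\ `|A x - z| < d).
    by apply/existsNP.
  exists (d / 2); first by rewrite /= divr_gt0.
  move=> w; rewrite -ball_normE /ball_ /= => zw Ew.
  have [x [xn Axw]] := Ew (d / 2) (divr_gt0 d0 (ltr0Sn _ 1)).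
  apply: (nd x); split => //.
  rewrite (_ : A x - z = (A x - w) + (w - z)); last by rewrite addrA subrK.
  apply: (le_lt_trans (ler_normD _ _)).
  by rewrite (splitr d) ltrD // distrC.
have [n nd] : exists n, ~ dense (F n).
  apply/existsNP => alld.
  have [z [_ Iz]] := Baire (fun i => conj (oF i) (alld i)) (ex_intro _ 0 I) openT.
  have Fz := Iz (Num.Def.trunc `|B z|).+1 I.
  apply: Fz => d d0; exists (B z); split; first exact/ltW/truncnS_gt.
  by rewrite BA subrr normr0.
have [Op [[y0 [oO Oy0]] OF]] := denseNE nd.
have := open_nbhs_nbhs (conj oO Oy0); move=> /nbhs_ballP [r r0 bO].
exists n, y0, r => // z zy0.
have Oz : Op z by apply: bO; rewrite -ball_normE /= distrC.
have : ~ F n z.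
  move=> Fz; have : (Op `&` F n) z by [].
  by rewrite OF.
by move=> /contrapT.
Qed.
Lemma approx_half (R : realType) (H : completeNormedModType R) (A : {linear H -> H}) :
  bijective A -> exists2 M : R, 0 < M &
    forall y, exists x, `|x| <= M * `|y| /\ `|A x - y| <= `|y| / 2.
Proof.
move=> bijA; have [n [y0 [r r0 P]]] := @baire_step _ _ _ bijA.
have P2 : forall z, `|z| < r -> forall d, 0 < d ->
    exists x, `|x| <= (2 * n%:R) /\ `|A x - z| < d.
  move=> z zr d d0.
  have d20 : 0 < d / 2 by rewrite divr_gt0.
  have [x1 [x1n Ax1]] := P y0 ltac:(by rewrite subrr normr0) _ d20.
  have [x2 [x2n Ax2]] := P (y0 + z) ltac:(by rewrite addrAC subrr add0r) _ d20.
  exists (x2 - x1); split.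
    apply: (le_trans (ler_normB _ _)); lra.
  rewrite linearB /= (_ : A x2 - A x1 - z = (A x2 - (y0 + z)) - (A x1 - y0)); last first.
    by rewrite opprB opprD (addrC (- y0) (- z)) (addrA (A x2)) -(addrA _ (- y0)) addKr addrAC.
  apply: (le_lt_trans (ler_normB _ _)); lra.
exists (4 * (n%:R + 1) / r); first by rewrite divr_gt0 // mulr_gt0 //; lra.
move=> y; have [->|y0'] := eqVneq y 0.
  by exists 0; rewrite linear0 subrr !normr0 mulr0 mul0r.
have ny0 : 0 < `|y| by rewrite normr_gt0.
pose z := (r / (2 * `|y|)) *: y.
have zr : `|z| < r.
  rewrite normrZ ger0_norm; last by rewrite divr_ge0 //; lra.
  have -> : r / (2 * `|y|) * `|y| = r / 2.
    by field; apply: lt0r_neq0.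
  lra.
have r40 : 0 < r / 4 by rewrite divr_gt0.
have [x' [x'n Ax']] := P2 z zr _ r40.
pose k := 2 * `|y| / r.
have k0 : 0 < k by rewrite /k divr_gt0 // mulr_gt0.
exists (k *: x'); split.
  rewrite normrZ gtr0_norm //.
  apply: (le_trans (ler_wpM2l (ltW k0) x'n)); rewrite /k.
  have ri : 0 < r^-1 by rewrite invr_gt0.
  have : 0 <= r^-1 * `|y| by rewrite mulr_ge0 // ltW.
  have n0 : 0 <= n%:R :> R by [].
  nra.
have yk : y = k *: z.
  rewrite /z scalerA (_ : k * (r / (2 * `|y|)) = 1) ?scale1r //.
  rewrite /k; field; apply/andP; split; apply: lt0r_neq0 => //.
rewrite {1}yk linearZ /= -scalerBr normrZ gtr0_norm //.
apply: (le_trans (ler_wpM2l (ltW k0) (ltW Ax'))); rewrite /k.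
have -> : 2 * `|y| / r * (r / 4) = `|y| / 2 by field; apply: lt0r_neq0.
exact: lexx.
Qed.
Lemma bounded_below (R : realType) (H : completeNormedModType R) (A : {linear H -> H}) :
  continuous A -> bijective A -> exists2 c : R, 0 < c & forall x, c * `|x| <= `|A x|.
Proof.
move=> cA bijA; have [M M0 hg] := @approx_half _ _ _ bijA.
have [g gP] := choice hg.
exists (2 * M)^-1; first by rewrite invr_gt0 mulr_gt0.
move=> x; rewrite mulrC -ler_pdivlMr; last by rewrite invr_gt0 mulr_gt0.
rewrite invrK.
pose y := A x.
pose ys k := iter k (fun u => u - A (g u)) y.
have ysS k : ys k.+1 = ys k - A (g (ys k)) by [].
have ysb k : `|ys k| <= `|y| * (2^-1) ^+ k.
  elim: k => [|k IH]; first by rewrite expr0 mulr1.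
  rewrite ysS distrC exprS mulrCA (mulrC 2^-1).
  apply: (le_trans (proj2 (gP (ys k)))).
  by rewrite ler_pM2r // invr_gt0.
pose u k := g (ys k).
have ub k : `|u k| <= geometric (M * `|y|) 2^-1 k.
  rewrite /= -mulrA; apply: (le_trans (proj1 (gP (ys k)))).
  by rewrite ler_wpM2l // ltW.
have Aser n : A (series u n) = y - ys n.
  elim: n => [|n IH]; first by rewrite /series /= big_geq // linear0 subrr.
  by rewrite seriesSr linearD IH ysS /u opprB addrA addrAC.
have z1 : `|2^-1 : R| < 1 by rewrite ger0_norm ?invr_ge0 // invf_lt1 // ltr1n.
have ncvg : cvgn [normed series u].
  apply: (series_le_cvg _ _ ub (is_cvg_geometric_series z1)) => n //=.
  apply: mulr_ge0; first by apply: mulr_ge0; [exact: ltW|exact: normr_ge0].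
  by apply: exprn_ge0; rewrite invr_ge0.
have scvg := normed_cvg ncvg.
pose l := limn (series u).
have Al : A l = y.
  have h1 : (A \o series u) @ \oo --> A l.
    apply: continuous_cvg; first exact: cA.
    exact: scvg.
  have h2 : (A \o series u) @ \oo --> y.
    apply/cvgrPdist_lt => e e0.
    have := cvg_geometric `|y| z1; move/cvgrPdist_lt => /(_ e e0).
    apply: filterS => n; rewrite /= Aser opprB addrCA subrr addr0 sub0r normrN.
    by apply: le_lt_trans; rewrite (le_trans (ysb n)) // ler_norm.
  exact: (cvg_unique _ h1 h2).
have xl : x = l by apply: (bij_inj bijA).
rewrite {1}xl; apply: (le_trans (lim_series_norm ncvg)).
have -> : `|y| * (2 * M) = limn (series (geometric (M * `|y|) 2^-1)).
  rewrite (cvg_lim _ (cvg_geometric_series z1)) //.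
  by field.
apply: ler_lim => //; first exact: is_cvg_geometric_series.
by apply: nearW => n; apply: ler_sum => k _; exact: ub.
Qed.
Section IP.
Variables (R : realType) (H : normedModType R) (inner : inner_product H).

Lemma ip0l c : inner 0 c = 0.
Proof.
have := ip_linl inner 1 0 0 c; rewrite scale1r addr0 mul1r; lra.
Qed.

Lemma ipDl a b c : inner (a + b) c = inner a c + inner b c.
Proof. by have := ip_linl inner 1 a b c; rewrite scale1r mul1r. Qed.

Lemma ipZl k a c : inner (k *: a) c = k * inner a c.
Proof. by have := ip_linl inner k a 0 c; rewrite addr0 ip0l addr0. Qed.

Lemma ipNl a c : inner (- a) c = - inner a c.
Proof. by rewrite -scaleN1r ipZl mulN1r. Qed.

Lemma ipBl a b c : inner (a - b) c = inner a c - inner b c.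
Proof. by rewrite ipDl ipNl. Qed.

Lemma ipDr a b c : inner c (a + b) = inner c a + inner c b.
Proof. by rewrite ip_sym ipDl !(ip_sym _ c). Qed.

Lemma ipNr a c : inner c (- a) = - inner c a.
Proof. by rewrite ip_sym ipNl ip_sym. Qed.

Lemma ipBr a b c : inner c (a - b) = inner c a - inner c b.
Proof. by rewrite ipDr ipNr. Qed.

Lemma ip_le_half a b : inner a b <= (`|a| ^+ 2 + `|b| ^+ 2) / 2.
Proof.
have := ip_norm inner (a - b); rewrite ipBl !ipBr !ip_norm (ip_sym _ b a).
have := sqr_ge0 `|a - b|; lra.
Qed.

Lemma ip_CS a b : `|inner a b| <= `|a| * `|b|.
Proof.
have [->|a0] := eqVneq a 0; first by rewrite ip0l !normr0 mul0r.
have [->|b0] := eqVneq b 0; first by rewrite ip_sym ip0l !normr0 mulr0.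
have na : 0 < `|a| by rewrite normr_gt0.
have nb : 0 < `|b| by rewrite normr_gt0.
have key : forall a', `|a'| = `|a| -> inner a' b <= `|a| * `|b|.
  move=> a' ha'.
  have := ip_le_half (`|a|^-1 *: a') (`|b|^-1 *: b).
  rewrite (ipZl (`|a|^-1)) (ip_sym _ a') (ipZl (`|b|^-1)) (ip_sym _ b) !normrZ !normfV !normr_id ha'.
  rewrite mulVf ?lt0r_neq0 // mulVf ?lt0r_neq0 // expr1n.
  move=> h; have : inner a' b <= `|a| * `|b| * 1.
    rewrite -ler_pdivrMl ?mulr_gt0 //.
    apply: (le_trans _ (le_trans h _)); last by lra.
    by rewrite mulrA invfM mulrC (mulrC `|a|^-1) mulrA.
  by rewrite mulr1.
rewrite ler_norml; apply/andP; split; last exact: key.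
rewrite lerNl -ipNl; apply: key; exact: normrN.
Qed.

End IP.
Lemma deriv_phi (R : realType) (H : normedModType R) (inner : inner_product H)
  (f : H -> H) (y h w : H) (t : R) :
  differentiable f (t *: h + y) ->
  is_derive t 1 (fun s : R => inner (f (s *: h + y)) w) (inner ('d f (t *: h + y) h) w).
Proof.
move=> df.
have Llin : linear (fun u : H => inner u w).
  move=> a u v; exact: ip_linl.
pose L : {linear H -> R} := HB.pack (fun u : H => inner u w) (GRing.isLinear.Build _ _ _ _ _ Llin).
have cL : continuous L.
  move=> u; apply/cvgrPdist_lt => e e0 /=.
  apply/nbhs_ballP; exists (e / (`|w| + 1)).
    by rewrite /= divr_gt0 // ltr_wpDl.
  move=> u' /=; rewrite -ball_normE /= => uu'.
  rewrite -ipBl; apply: (le_lt_trans (@ip_CS _ _ inner _ _)).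
  have w1 : 0 < `|w| + 1 by rewrite ltr_wpDl.
  rewrite ltr_pdivlMr // in uu'.
  apply: le_lt_trans uu'; apply: ler_wpM2l => //; lra.
pose g := fun s : R => s *: h + y.
have dg : is_diff t g (( *:%R ^~ h) + 0).
  by rewrite /g; apply: is_diffD.
have -> : (fun s : R => inner (f (s *: h + y)) w) = L \o (f \o g) by [].
have dfg : differentiable (f \o g) t by apply: differentiable_comp.
have dLfg : differentiable (L \o (f \o g)) t.
  by apply: differentiable_comp => //; exact: linear_differentiable.
apply: DeriveDef; first exact/derivable1_diffP.
have [dgt dgv] := dg.
rewrite deriveE //. rewrite (diff_comp dfg); last exact: linear_differentiable.
rewrite (diff_lin _ cL) (diff_comp dgt) // dgv /=.
have -> : (( *:%R^~ h + 0) 1 : H) = h. by rewrite !fctE scale1r addr0.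
by [].
Qed.
Lemma seg_id (R : realType) (V : lmodType R) (xs x y : V) (s : R) :
  xs - (s *: (x - y) + y) = (1 - s) *: (xs - y) + s *: (xs - x).
Proof.
have e1 : (xs - x) - (xs - y) = y - x by rewrite opprB addrC addrA subrK.
rewrite scalerBl scale1r -addrA (addrC (- _)) -scalerBr e1 -[y - x]opprB scalerN.
by rewrite opprD addrA addrAC.
Qed.
Theorem theorem3p3 (R : realType) (H : completeNormedModType R)
    (inner : inner_product H) (xstar : H) (U : set H) (f : H -> H) :
  open U -> U xstar ->
  C1_on U f ->
  bijective ('d f xstar) ->
  (exists x0, U x0 /\ f x0 = 0) ->
  let v := fun x : H => 'd f xstar x in
  exists2 eps : R, 0 < eps & ball xstar eps `<=` U /\
    exists2 alpha : R, 0 < alpha &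
      forall x y, ball xstar eps x -> ball xstar eps y ->
        alpha * `|x - y| ^+ 2 <= inner (f x - f y) (v x - v y).
Proof.
move=> oU Ux [dU cU] bij _ v.
have dfx := dU _ Ux.
have cA : continuous ('d f xstar) := diff_continuous dfx.
have [c c0 Ab] := @bounded_below _ _ _ cA bij.
have c20 : 0 < c / 2 by rewrite divr_gt0.
have [d d0 hd] := cU xstar Ux (c / 2) c20.
have : nbhs xstar U by apply: open_nbhs_nbhs; split.
move=> /nbhs_ballP [e0 e00 be].
pose eps := Num.min d e0.
have epsd : eps <= d by rewrite ge_min lexx.
have epse : eps <= e0 by rewrite ge_min lexx orbT.
have eps0 : 0 < eps by rewrite lt_min d0 e00.
have inU : forall z, `|xstar - z| < eps -> U z.
  move=> z bz; apply: be; rewrite -ball_normE /=; exact: lt_le_trans bz epse.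
exists eps => //; split.
  by move=> z; rewrite -ball_normE /=; apply: inU.
exists (c ^+ 2 / 4); first by rewrite divr_gt0 // exprn_gt0.
move=> x y; rewrite -!ball_normE /= => bx byy.
pose h := x - y.
have vh : v x - v y = 'd f xstar h by rewrite /v /h linearB.
rewrite vh; pose w := 'd f xstar h.
have seg : forall s : R, 0 <= s <= 1 -> `|xstar - (s *: h + y)| < eps.
  move=> s /andP [s0 s1]; rewrite seg_id.
  apply: (le_lt_trans (ler_normD _ _)); rewrite !normrZ !ger0_norm //; last lra.
  have [->|sn0] := eqVneq s 0.
    by rewrite subr0 !mul1r mul0r addr0.
  have sp : 0 < s by rewrite lt_def sn0 s0.
  have : (1 - s) * `|xstar - y| + s * `|xstar - x| < (1 - s) * eps + s * eps.
    apply: ler_ltD; first by apply: ler_wpM2l => //; [lra | exact: ltW].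
    by rewrite ltr_pM2l.
  lra.
pose phi := fun s : R => inner (f (s *: h + y)) w.
pose dphi := fun s : R => inner ('d f (s *: h + y) h) w.
have der : forall s : R, 0 <= s <= 1 -> is_derive s 1 phi (dphi s).
  move=> s hs; apply: deriv_phi; apply: dU; apply: inU; exact: seg.
have [t ht eq] : exists2 t, t \in `[0, 1]%R & phi 1 - phi 0 = dphi t * (1 - 0).
  apply: MVT_segment => //.
    move=> s; rewrite in_itv /= => /andP [s0 s1]; apply: der; apply/andP; split; exact: ltW.
  apply: derivable_within_continuous => s; rewrite in_itv /= => hs.
  by have [] := der s hs.
have -> : f x - f y = f (1 *: h + y) - f (0 *: h + y) by rewrite scale1r scale0r add0r /h subrK.
rewrite ipBl -/(phi 1) -/(phi 0) eq subr0 mulr1 /dphi.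
have tb : 0 <= t <= 1 by move: ht; rewrite in_itv.
pose z := t *: h + y.
pose s := 'd f z h - w.
have sb : `|s| <= c / 2 * `|h|.
  apply: hd; first by apply: inU; exact: seg.
  exact: lt_le_trans (seg _ tb) epsd.
have -> : 'd f z h = w + s by rewrite /s addrC subrK.
rewrite ipDl ip_norm.
have := @ip_le_half _ _ inner (- s) w; rewrite ipNl normrN => hs.
have wb := Ab h.
have nh := normr_ge0 h.
have ns := normr_ge0 s.
have ch0 : 0 <= c * `|h| by rewrite mulr_ge0 // ltW.
have wsq : c ^+ 2 * `|h| ^+ 2 <= `|w| ^+ 2.
  by rewrite -exprMn !expr2; apply: ler_pM.
have ssq : `|s| ^+ 2 <= (c / 2) ^+ 2 * `|h| ^+ 2.
  by rewrite -exprMn !expr2; apply: ler_pM.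
have : 0 <= c ^+ 2 * `|h| ^+ 2 by rewrite mulr_ge0 // exprn_ge0 // ltW.
rewrite expr_div_n in ssq.
lra.
Qed.
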